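(* Let $(X,\tau)$ be a Fréchet topological space in which every sequence has at most one limit (in particular, any Fréchet Hausdorff space). Then $(X,\tau)$ is an accessibility space.
   Context: A topological space is Fréchet if whenever $x\in\mathrm{cl}A$ there is a sequence in $A$ converging to $x$. A topological space $(X,\tau)$ is an accessibility space if for each $x_0\in X$ and every $H\subset X$ with $x_0\in\mathrm{cl}_\tau(H\setminus\{x_0\})$, there is a closed subset $F$ of $X$ with $x_0\in\mathrm{cl}_\tau(F\setminus\{x_0\})$ and $x_0\notin\mathrm{cl}_\tau(F\setminus H\setminus\{x_0\})$. *)

(* Defs.v *)
From Stdlib Require Import Classical.

Set Implicit Arguments.

Record topology (X : Type) : Type := Topology {
  is_open : (X -> Prop) -> Prop;
  open_full : is_open (fun _ => True);
  open_inter : forall U V, is_open U -> is_open V ->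
                 is_open (fun x => U x /\ V x);
  open_union : forall (F : (X -> Prop) -> Prop),
                 (forall U, F U -> is_open U) ->
                 is_open (fun x => exists U, F U /\ U x)
}.

Section TopDefs.
Variables (X : Type) (t : topology X).

Definition is_closed (F : X -> Prop) : Prop :=
  is_open t (fun x => ~ F x).

Definition in_closure (A : X -> Prop) (x : X) : Prop :=
  forall U, is_open t U -> U x -> exists y, U y /\ A y.

Definition converges (s : nat -> X) (x : X) : Prop :=
  forall U, is_open t U -> U x -> exists N, forall n, N <= n -> U (s n).

Definition frechet : Prop :=
  forall (A : X -> Prop) (x : X), in_closure A x ->
    exists s : nat -> X, (forall n, A (s n)) /\ converges s x.

Definition unique_seq_limits : Prop :=
  forall (s : nat -> X) (x y : X), converges s x -> converges s y -> x = y.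

Definition setminus1 (A : X -> Prop) (x0 : X) : X -> Prop :=
  fun x => A x /\ x <> x0.

Definition accessibility_space : Prop :=
  forall (x0 : X) (H : X -> Prop),
    in_closure (setminus1 H x0) x0 ->
    exists F : X -> Prop,
      is_closed F /\
      in_closure (setminus1 F x0) x0 /\
      ~ in_closure (setminus1 (fun x => F x /\ ~ H x) x0) x0.

End TopDefs.

(* Main.v *)
Require Import Defs.
From Stdlib Require Import Classical Arith FunctionalExtensionality PropExtensionality Lia.

Section P.
Variables (X : Type) (t : topology X).

Lemma t1 : unique_seq_limits t -> forall x y : X, x <> y ->
  exists U, is_open t U /\ U y /\ ~ U x.
Proof.
  intros Hu x y Hxy. apply NNPP; intro Hn. apply Hxy.
  apply (Hu (fun _ => x)).
  - intros U _ Ux. exists 0. auto.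
  - intros U HU Uy. exists 0. intros. apply NNPP; intro. apply Hn. exists U; auto.
Qed.

Lemma closed_of : forall F : X -> Prop,
  (forall y, ~ F y -> exists U, is_open t U /\ U y /\ forall z, U z -> ~ F z) ->
  is_closed t F.
Proof.
  intros F HF. unfold is_closed.
  assert (E : (fun x => ~ F x) =
     (fun x => exists U, (fun U => is_open t U /\ forall z, U z -> ~ F z) U /\ U x)).
  { apply functional_extensionality; intro x; apply propositional_extensionality; split.
    - intro Hx. destruct (HF x Hx) as [U [HU [Ux HUz]]]. exists U. auto.
    - intros [U [[_ HUz] Ux]]. auto. }
  rewrite E. apply open_union. intros U [HU _]; exact HU.
Qed.

End P.
Arguments t1 {X t}.
Arguments closed_of {X t}.

Theorem proposition4p1 (X : Type) (t : topology X) :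
  frechet t -> unique_seq_limits t -> accessibility_space t.
Proof.
  intros Hf Hu x0 H Hcl.
  destruct (Hf _ _ Hcl) as [s [Hs Hconv]].
  exists (fun x => x = x0 \/ exists n, s n = x).
  split; [|split].
  - apply closed_of. intros y Hy.
    apply NNPP; intro Hn.
    assert (Hyx0 : y <> x0) by (intro; apply Hy; auto).
    assert (Hycl : in_closure t (fun z => exists n, s n = z) y).
    { intros U HU Uy.
      destruct (t1 Hu _ _ (not_eq_sym Hyx0)) as [V [HV [Vy Vx0]]].
      apply NNPP; intro Hno. apply Hn.
      exists (fun z => U z /\ V z). split; [apply open_inter; auto|]. split; [split; auto|].
      intros z [Uz Vz] [Fz|Fz]; [subst; auto|]. apply Hno. exists z; auto. }
    destruct (Hf _ _ Hycl) as [u [Hu1 Hu2]].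
    assert (Hav : forall N, exists V, is_open t V /\ V y /\ forall n, n < N -> ~ V (s n)).
    { induction N as [|N [V [HV [Vy HVn]]]].
      - exists (fun _ => True). split; [apply open_full|]. split; auto. intros; lia.
      - assert (Hsy : s N <> y) by (intro E; apply Hy; right; eauto).
        destruct (t1 Hu _ _ Hsy) as [W [HW [Wy Ws]]].
        exists (fun z => V z /\ W z). split; [apply open_inter; auto|]. split; [split; auto|].
        intros n Hn' [Vn Wn]. destruct (Nat.eq_dec n N) as [->|Hne]; [auto|].
        apply (HVn n); [lia|auto]. }
    apply Hyx0. apply (Hu u); [exact Hu2|].
    intros U HU Ux0. destruct (Hconv U HU Ux0) as [N HN].
    destruct (Hav N) as [V [HV [Vy HVn]]].
    destruct (Hu2 V HV Vy) as [K HK]. exists K. intros k Hk.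
    destruct (Hu1 k) as [n Hn']. rewrite <- Hn'.
    apply HN. destruct (Nat.lt_ge_cases n N) as [Hlt|]; [|auto].
    exfalso. apply (HVn n Hlt). rewrite Hn'. auto.
  - intros U HU Ux0. destruct (Hconv U HU Ux0) as [N HN].
    exists (s N). split; [apply HN; auto|]. split; [right; eauto|].
    destruct (Hs N); auto.
  - intro Hc. destruct (Hc (fun _ => True) (open_full t) I) as [y [_ [[Fy Hy] Hne]]].
    destruct Fy as [->|[n <-]]; [auto|]. apply Hy. destruct (Hs n); auto.
Qed.
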